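(* There is $N_0$ such that for all integers $N\ge N_0$ the following holds. Let $r,d$ be positive integers with $\gcd(d,r)=1$, let $\Pi=r(r+d)\cdots(r+(N-1)d)$, and perform the following elimination process: for every prime factor $p$ of $\Pi$, remove one term $r+id$ ($0\le i\le N-1$) for which $\mathrm{ord}_p(r+id)$ is maximal among all terms $r+jd$, $0\le j\le N-1$ (ties resolved arbitrarily; each term is removed at most once). Let $M$ be the total number of removed terms. Then either both $d<N^2$ and $r<N^2$, or $M>N/2$.
   Context: For a prime $p$ and a nonzero integer $m$, $\mathrm{ord}_p(m)$ denotes the largest integer $e$ with $p^e\mid m$. *)

(* Defs.v *)
From mathcomp Require Import all_boot.
Set Implicit Arguments. Unset Strict Implicit. Unset Printing Implicit Defensive.

Definition ap_term (r d i : nat) : nat := r + i * d.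

Definition ap_prod (r d N : nat) : nat := \prod_(i < N) ap_term r d i.

Definition valid_elimination (r d N : nat) (f : nat -> nat) : Prop :=
  forall p, prime p -> p %| ap_prod r d N ->
    f p < N /\ forall j, j < N -> logn p (ap_term r d j) <= logn p (ap_term r d (f p)).

(* Number of removed terms: the number of distinct indices chosen
   (each term is removed at most once). *)
Definition removed_count (r d N : nat) (f : nat -> nat) : nat :=
  size (undup [seq f p | p <- primes (ap_prod r d N)]).

(* Main.v *)
Require Import Defs.
From mathcomp Require Import all_boot.
From mathcomp Require Import zify.
Set Implicit Arguments. Unset Strict Implicit. Unset Printing Implicit Defensive.

Definition dst (i m : nat) := if i == m then 1 else (i - m) + (m - i).

Lemma dst_gt0 i m : 0 < dst i m.
Proof. rewrite /dst; case: eqP => // /eqP; lia. Qed.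

Lemma prod_sub_fact a m : \prod_(i <- iota a m) (a + m - i) = m`!.
Proof.
elim: m a => [|m IH] a; first by rewrite big_nil.
rewrite /= big_cons -addSnnS IH factS. congr (_ * _). lia.
Qed.

Lemma prod_sub_fact2 a k : \prod_(i <- iota a.+1 k) (i - a) = k`!.
Proof.
elim: k => [|k IH]; first by rewrite big_nil.
rewrite factS -{1}(addn1 k) iotaD big_cat IH /= big_seq1 mulnC. congr (_ * _). lia.
Qed.

Lemma prod_dst N m : m < N -> \prod_(i <- iota 0 N) dst i m = m`! * (N - m.+1)`!.
Proof.
move=> mN. set k := N - m.+1.
have -> : N = m + k.+1 by rewrite /k; lia.
rewrite iotaD big_cat add0n /= big_cons {2}/dst eqxx mul1n.
rewrite -{1}(prod_sub_fact 0 m) -(prod_sub_fact2 m k).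
congr (_ * _); apply: eq_big_seq => i; rewrite mem_iota => /andP[H1 H2];
  rewrite /dst; case: eqP => [E|_]; lia.
Qed.

Lemma logn_prod p (s : seq nat) (F : nat -> nat) : (forall i, 0 < F i) ->
  logn p (\prod_(i <- s) F i) = \sum_(i <- s) logn p (F i).
Proof.
move=> H; elim: s => [|x s IH]; first by rewrite !big_nil logn1.
rewrite !big_cons lognM ?IH //; apply: prodn_gt0 => i; exact: H.
Qed.

Lemma dvd_of_logn a b : 0 < a -> 0 < b ->
  (forall p, prime p -> logn p a <= logn p b) -> a %| b.
Proof.
move=> a0 b0 H; apply/(dvdn_partP _ a0) => p; rewrite mem_primes => /andP[pp _].
by rewrite p_part pfactor_dvdn // H.
Qed.

Lemma term_bound r d p i m : 0 < r -> coprime d r -> prime p -> i != m ->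
  logn p (ap_term r d i) <= logn p (ap_term r d m) ->
  logn p (ap_term r d i) <= logn p (dst i m).
Proof.
move=> r0 cop pp neq le.
have a0 : forall j, 0 < ap_term r d j by move=> j; rewrite /ap_term; lia.
set e := logn p (ap_term r d i) in le *.
case: (posnP e) => [->//|e0].
have pa : p %| ap_term r d i.
  by move: e0; rewrite /e logn_gt0 mem_primes => /and3P[].
have pd : ~~ (p %| d).
  apply/negP => pd.
  have pr : p %| r by move: pa; rewrite /ap_term dvdn_addl // dvdn_mull.
  have : p %| gcdn d r by rewrite dvdn_gcd pd pr.
  by rewrite (eqP cop) dvdn1 => /eqP p1; move: (prime_gt1 pp); rewrite p1.
have pea : p ^ e %| ap_term r d i by rewrite pfactor_dvdn.
have pem : p ^ e %| ap_term r d m by rewrite pfactor_dvdn.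
have cpd : coprime (p ^ e) d by rewrite coprime_pexpl // prime_coprime.
rewrite -pfactor_dvdn ?dst_gt0 // /dst (negbTE neq).
case: (ltnP i m) => im.
- have E : ap_term r d m = ap_term r d i + (m - i) * d.
    rewrite /ap_term -addnA -mulnDl; congr (_ + _ * _); lia.
  move: pem; rewrite E dvdn_addr // Gauss_dvdl //.
  by have -> : i - m + (m - i) = m - i by lia.
- have E : ap_term r d i = ap_term r d m + (i - m) * d.
    rewrite /ap_term -addnA -mulnDl; congr (_ + _ * _); lia.
  move: pea; rewrite E dvdn_addr // Gauss_dvdl //.
  by have -> : i - m + (m - i) = i - m by lia.
Qed.

Lemma fact_le_pow n : 0 < n -> n`! <= n ^ n.-1.
Proof.
elim: n => [//|n IH] _.
case: n IH => [|n] IH; first by [].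
rewrite factS /= expnS leq_mul2l /=.
apply: leq_trans (IH isT) _. by case: n {IH} => [|n] //; rewrite leq_exp2r.
Qed.

Lemma prod_lb1 (F : nat -> nat) c (s : seq nat) :
  (forall i, i \in s -> c <= F i) -> c ^ size s <= \prod_(i <- s) F i.
Proof.
elim: s => [|x s IH] H; first by rewrite big_nil.
rewrite big_cons /= expnS leq_mul //.
  by apply: H; rewrite inE eqxx.
by apply: IH => i iS; apply: H; rewrite inE iS orbT.
Qed.

Lemma prod_lb2 (F : nat -> nat) c (s : seq nat) : 0 < c -> uniq s ->
  (forall i, 0 < F i) -> (forall i, i != 0 -> c <= F i) ->
  c ^ (size s).-1 <= \prod_(i <- s) F i.
Proof.
move=> c0 us F0 Fc.
case: (boolP (0 \in s)) => s0.
  rewrite (perm_big _ (perm_to_rem s0)) big_cons -(size_rem s0).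
  have H1 : c ^ size (rem 0 s) <= \prod_(i <- rem 0 s) F i.
    apply: prod_lb1 => i; rewrite (mem_rem_uniq _ us) inE => /andP[i0 _]; exact: Fc.
  apply: leq_trans H1 _; by rewrite leq_pmull.
apply: leq_trans (prod_lb1 (s := s) (c := c) (F := F) _).
  by apply: leq_pexp2l => //; apply: leq_pred.
move=> i iS; apply: Fc; apply/eqP => E; move: s0; by rewrite -E iS.
Qed.

Lemma term_dvd r d N i : i < N -> ap_term r d i %| ap_prod r d N.
Proof. move=> iN; rewrite /ap_prod (bigD1 (Ordinal iN)) //= dvdn_mulr //. Qed.

Theorem corollary1 :
  exists N0 : nat, forall N : nat, N0 <= N ->
    forall r d : nat, 0 < r -> 0 < d -> coprime d r ->
    forall f : nat -> nat, valid_elimination r d N f ->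
      (d < N ^ 2 /\ r < N ^ 2) \/ N < 2 * removed_count r d N f.
Proof.
exists 3 => N N3 r d r0 d0 cop f val.
set U := [seq f p | p <- primes (ap_prod r d N)].
set S := [seq i <- iota 0 N | i \notin U].
set P := \prod_(i <- S) ap_term r d i.
have apos : forall i, 0 < ap_term r d i by move=> i; rewrite /ap_term; lia.
have Pipos : 0 < ap_prod r d N by apply: prodn_gt0.
have HP : P %| (N.-1)`!.
  apply: dvd_of_logn; [exact: prodn_gt0 | exact: fact_gt0 | ].
  move=> p pp.
  rewrite /P logn_prod //.
  case: (boolP (p %| ap_prod r d N)) => pP; last first.
    rewrite big_seq big1 // => i; rewrite mem_filter mem_iota => /andP[_ /andP[_ iN]].
    apply/eqP; rewrite -leqn0 leqNgt logn_gt0 mem_primes pp apos /=.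
    apply: contra pP => pa; exact: dvdn_trans pa (term_dvd r d iN).
  have [fN fmax] := val p pp pP.
  set m := f p.
  have mU : m \in U by apply: map_f; rewrite mem_primes pp Pipos pP.
  apply: (@leq_trans (\sum_(i <- iota 0 N) logn p (dst i m))).
    rewrite /S big_filter big_mkcond /= big_seq [X in _ <= X]big_seq.
    apply: leq_sum => i; rewrite mem_iota add0n => /andP[_ iN].
    case: ifP => // iU.
    apply: term_bound => //; last exact: fmax.
    by apply/eqP => E; move: iU; rewrite E mU.
  rewrite -logn_prod; last by move=> i; exact: dst_gt0.
  apply: dvdn_leq_log; first exact: fact_gt0.
  rewrite prod_dst //.
  have -> : N - m.+1 = N.-1 - m by lia.
  rewrite -(@bin_fact N.-1 m); [exact: dvdn_mull | lia].
have HPle : P <= (N.-1)`! := dvdn_leq (fact_gt0 _) HP.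
case: (ltnP N (2 * removed_count r d N f)) => [H|H]; [by right|left].
case: (boolP ((d < N^2) && (r < N^2))) => [/andP//|Hn]; exfalso.
have Fc : forall i, i != 0 -> N^2 <= ap_term r d i.
  move=> i i0; move: Hn; rewrite negb_and -!leqNgt /ap_term => /orP[] H1.
    have : d <= i * d by rewrite leq_pmull // lt0n.
    lia.
  lia.
have uS : uniq S by rewrite filter_uniq // iota_uniq.
have LB : (N^2) ^ (size S).-1 <= P.
  apply: prod_lb2 => //; rewrite expn_gt0; lia.
have Hc : count (mem U) (iota 0 N) + size S = N.
  by rewrite size_filter -[RHS](size_iota 0 N) -(count_predC (mem U)).
have Hc2 : count (mem U) (iota 0 N) <= removed_count r d N f.
  rewrite -size_filter /removed_count; apply: uniq_leq_size.
    by rewrite filter_uniq // iota_uniq.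
  by move=> i; rewrite mem_filter mem_undup => /andP[].
have F1 : (N.-1)`! <= (N.-1) ^ (N.-1).-1 by apply: fact_le_pow; lia.
have F2 : (N.-1) ^ (N.-1).-1 < N ^ (N.-1).-1.
  rewrite ltn_exp2r; lia.
have F3 : N ^ (N.-1).-1 <= (N ^ 2) ^ (size S).-1.
  rewrite -expnM; apply: leq_pexp2l; lia.
lia.
Qed.
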